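(* Let $n\ge3$, $1\le i\le n-2$ and $j=i+1$. In the group algebra $\mathbb{Q}(t_0,t_1)[B_n]$, let $I$ be the two-sided ideal generated by the elements \[ s_k^2+(1-t_0-t_1)s_k+(t_0t_1-t_0-t_1)\cdot1+t_0t_1\,\overline{s}_k,\qquad k=1,\dots,n-1. \] Let \[ X=\overline{s}_is_js_i-s_is_j\overline{s}_i-\overline{s}_i\overline{s}_js_i+s_i\overline{s}_j\overline{s}_i-\big(s_is_j-s_i\overline{s}_j-\overline{s}_is_j+\overline{s}_i\overline{s}_j-s_js_i+s_j\overline{s}_i+\overline{s}_js_i-\overline{s}_j\overline{s}_i\big) \] and $Y=s_j\overline{s}_is_j-Z$, where \[ \begin{aligned} Z={}&(t_0t_1+1-t_0-t_1)s_i+(t_0+t_1-t_0t_1-1)\overline{s}_i-(t_0+t_1-1)s_is_j+(t_0+t_1-1)\overline{s}_is_j+t_0t_1\,s_i\overline{s}_j-t_0t_1\,\overline{s}_i\overline{s}_j\\ &+s_js_i-s_j\overline{s}_i-(t_0+t_1-t_0t_1)\overline{s}_js_i+(t_0+t_1-t_0t_1)\overline{s}_j\overline{s}_i-(t_0+t_1)s_is_j\overline{s}_i+(t_0+t_1)s_i\overline{s}_j\overline{s}_i\\ &+s_is_js_i-t_0t_1\,\overline{s}_i\overline{s}_j\overline{s}_i+t_0t_1\,\overline{s}_js_i\overline{s}_j. \end{aligned} \] Then the two-sided ideal generated by $I$ and $X$ equals the two-sided ideal generated by $I$ and $Y$; that is, the relation $X=0$ is equivalent to the relation $Y=0$ modulo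 the relations generating $I$.
   Context: $B_n$ is the Artin braid group with standard generators $s_1,\dots,s_{n-1}$ and $\overline{s}_k=s_k^{-1}$; $\mathbb{Q}(t_0,t_1)[B_n]$ is its group algebra over the field of rational functions in two variables. *)

(* Defs.v *)
From HB Require Import structures.
From mathcomp Require Import all_boot all_order all_algebra.
Set Implicit Arguments. Unset Strict Implicit. Unset Printing Implicit Defensive.
Import GRing.Theory.
Local Open Scope ring_scope.

Definition Qt := {fraction {poly {poly rat}}}.
Definition t0 : Qt := tofrac (('X : {poly rat})%:P).
Definition t1 : Qt := tofrac ('X : {poly {poly rat}}).

(* A family (s k, sb k)_(1 <= k <= n-1) in a Qt-algebra A realising a
   representation of B_n (equivalently, a Qt-algebra morphism
   Qt[B_n] -> A with s_k |-> s k, \bar s_k |-> sb k). *)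
Definition braid_family (n : nat) (A : algType Qt) (s sb : nat -> A) : Prop :=
  (forall k, (1 <= k <= n.-1)%N -> s k * sb k = 1 /\ sb k * s k = 1) /\
  (forall k, (1 <= k)%N -> (k.+1 <= n.-1)%N ->
     s k * s k.+1 * s k = s k.+1 * s k * s k.+1) /\
  (forall k l, (1 <= k <= n.-1)%N -> (1 <= l <= n.-1)%N -> (k.+1 < l)%N ->
     s k * s l = s l * s k).

(* The generators of the ideal I vanish. *)
Definition cubic_rel (n : nat) (A : algType Qt) (s sb : nat -> A) : Prop :=
  forall k, (1 <= k <= n.-1)%N ->
    s k ^+ 2 + (1 - t0 - t1) *: s k + (t0 * t1 - t0 - t1) *: (1 : A)
      + (t0 * t1) *: sb k = 0.

Definition relX (A : algType Qt) (s sb : nat -> A) (i : nat) : A :=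
  let j := i.+1 in
  sb i * s j * s i - s i * s j * sb i - sb i * sb j * s i + s i * sb j * sb i
  - (s i * s j - s i * sb j - sb i * s j + sb i * sb j
     - s j * s i + s j * sb i + sb j * s i - sb j * sb i).

Definition relZ (A : algType Qt) (s sb : nat -> A) (i : nat) : A :=
  let j := i.+1 in
  (t0 * t1 + 1 - t0 - t1) *: s i + (t0 + t1 - t0 * t1 - 1) *: sb i
  - (t0 + t1 - 1) *: (s i * s j) + (t0 + t1 - 1) *: (sb i * s j)
  + (t0 * t1) *: (s i * sb j) - (t0 * t1) *: (sb i * sb j)
  + s j * s i - s j * sb i - (t0 + t1 - t0 * t1) *: (sb j * s i)
  + (t0 + t1 - t0 * t1) *: (sb j * sb i)
  - (t0 + t1) *: (s i * s j * sb i) + (t0 + t1) *: (s i * sb j * sb i)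
  + s i * s j * s i - (t0 * t1) *: (sb i * sb j * sb i)
  + (t0 * t1) *: (sb j * s i * sb j).

Definition relY (A : algType Qt) (s sb : nat -> A) (i : nat) : A :=
  s i.+1 * sb i * s i.+1 - relZ s sb i.

(* Main.v *)
Require Import Defs.
From HB Require Import structures.
From mathcomp Require Import all_boot all_order all_algebra.
From mathcomp Require Import ring.
Set Implicit Arguments. Unset Strict Implicit. Unset Printing Implicit Defensive.
Import GRing.Theory.
Local Open Scope ring_scope.

Lemma wL1 (R : pzRingType) (a A b : R) : A * a = 1 -> a * b * a = b * a * b ->
  A * b * a * b = b * a.
Proof.
move=> Aa br.
transitivity (A * (b * a * b)); first by rewrite !mulrA.
by rewrite -br !mulrA Aa mul1r.
Qed.

Lemma wL10 (R : pzRingType) (a A b B : R) : a * A = 1 -> B * b = 1 -> a * b * a = b * a * b ->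
  B * a * b = a * b * A.
Proof.
move=> aA Bb br.
transitivity (B * (a * b * a) * A); first by rewrite !mulrA -(mulrA _ a A) aA mulr1.
by rewrite br !mulrA Bb mul1r.
Qed.

Lemma wL3 (R : pzRingType) (a A b B : R) : a * A = 1 -> A * a = 1 -> B * b = 1 -> a * b * a = b * a * b ->
  A * B * a * b = b * A.
Proof.
move=> aA Aa Bb br.
by rewrite -!mulrA (mulrA B) (wL10 aA Bb br) !mulrA Aa mul1r.
Qed.

Lemma wL11 (R : pzRingType) (a A b B : R) : a * A = 1 -> A * a = 1 -> b * B = 1 -> B * b = 1 ->
  a * b * a = b * a * b -> B * A * b = a * B * A.
Proof.
move=> aA Aa bB Bb br.
have e1 : a * b * A * (a * B * A) = 1.
  by rewrite !mulrA -(mulrA _ A a) Aa mulr1 -(mulrA _ b B) bB mulr1 aA.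
have e2 : B * A * b * (a * b * A) = 1.
  by rewrite !mulrA -(mulrA _ b a) -(mulrA _ (b * a) b) -br !mulrA -(mulrA _ A a) Aa mulr1
    -(mulrA _ a A) aA mulr1 Bb.
transitivity (B * A * b * (a * b * A) * (a * B * A)).
  by rewrite -(mulrA _ (a * b * A)) e1 mulr1.
by rewrite e2 mul1r.
Qed.

Lemma wL7 (R : pzRingType) (a A b B : R) : a * A = 1 -> A * a = 1 -> b * B = 1 -> B * b = 1 ->
  a * b * a = b * a * b -> B * A * B = A * B * A.
Proof.
move=> aA Aa bB Bb br.
have e1 : a * b * a * (A * B * A) = 1.
  by rewrite !mulrA -(mulrA _ a A) aA mulr1 -(mulrA _ b B) bB mulr1 aA.
have e2 : B * A * B * (b * a * b) = 1.
  by rewrite !mulrA -(mulrA _ B b) Bb mulr1 -(mulrA _ A a) Aa mulr1 Bb.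
transitivity (B * A * B * (a * b * a) * (A * B * A)).
  by rewrite -(mulrA _ (a * b * a)) e1 mulr1.
by rewrite br e2 mul1r.
Qed.

From mathcomp Require Import zify.

Definition fpoly (F : fieldType) (V : lmodType F) (w : nat -> V) (p : {poly F}) : V :=
  \sum_(k < 16) p`_k *: w k.

Lemma fpolyD (F : fieldType) (V : lmodType F) (w : nat -> V) p q : fpoly w (p + q) = fpoly w p + fpoly w q.
Proof. by rewrite /fpoly -big_split; apply: eq_bigr => k _; rewrite coefD scalerDl. Qed.

Lemma fpolyN (F : fieldType) (V : lmodType F) (w : nat -> V) p : fpoly w (- p) = - fpoly w p.
Proof. by rewrite /fpoly -sumrN; apply: eq_bigr => k _; rewrite coefN scaleNr. Qed.

Lemma fpolyZ (F : fieldType) (V : lmodType F) (w : nat -> V) c p : fpoly w (c *: p) = c *: fpoly w p.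
Proof. by rewrite /fpoly scaler_sumr; apply: eq_bigr => k _; rewrite coefZ scalerA. Qed.

Lemma fpolyX (F : fieldType) (V : lmodType F) (w : nat -> V) j : (j < 16)%N -> fpoly w 'X^j = w j.
Proof.
move=> hj; rewrite /fpoly (bigD1 (Ordinal hj)) //= coefXn eqxx scale1r big1 ?addr0 //.
move=> k hk; rewrite coefXn; case: eqP => [e|]; last by rewrite scale0r.
by case/eqP: hk; apply: val_inj.
Qed.

Lemma key_poly (F : fieldType) (x y : F) : 'X^0 - - ((1 - x - y) *: ('X^1) + (x * y - x - y) *: ('X^2) + (x * y) *: ('X^3)) - 'X^4 - ((1 - x - y) *: ('X^5) + (x * y - x - y) *: ('X^6) + (x * y) *: ('X^7)) + (- - ((1 - x - y) *: ('X^8) + (x * y - x - y) *: 'X^9 + (x * y) *: ('X^10)) + 'X^9 - ((1 - x - y) *: ('X^11) + (x * y - x - y) *: 'X^12 + (x * y) *: ('X^13)) - 'X^12 + 'X^14 - 'X^15 - 'X^1 + 'X^5) + ('X^15 + (- ((x * y + 1 - x - y) *: 'X^9) - (x + y - x * y - 1) *: 'X^12 + (x + y - 1) *: ('X^8) - (x + y - 1) *: ('X^11) - (x * y) *: ('X^10) + (x * y) *: ('X^13) - 'X^0 + 'X^4 + (x + y - x * y) *: ('X^2) - (x + y - x * y) *: ('X^6) + (x + y) *: ('X^1) - (x + y) *: ('X^5) - 'X^14 + (x * y) *: ('X^7) - (x * y) *: ('X^3))) = 0 :> {poly F}.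
Proof. rewrite -!mul_polyC. ring. Qed.

Lemma key_lin (F : fieldType) (x y : F) (V : lmodType F) (w0 w1 w2 w3 w4 w5 w6 w7 w8 w9 w10 w11 w12 w13 w14 w15 : V) : w0 - - ((1 - x - y) *: (w1) + (x * y - x - y) *: (w2) + (x * y) *: (w3)) - w4 - ((1 - x - y) *: (w5) + (x * y - x - y) *: (w6) + (x * y) *: (w7)) + (- - ((1 - x - y) *: (w8) + (x * y - x - y) *: w9 + (x * y) *: (w10)) + w9 - ((1 - x - y) *: (w11) + (x * y - x - y) *: w12 + (x * y) *: (w13)) - w12 + w14 - w15 - w1 + w5) + (w15 + (- ((x * y + 1 - x - y) *: w9) - (x + y - x * y - 1) *: w12 + (x + y - 1) *: (w8) - (x + y - 1) *: (w11) - (x * y) *: (w10) + (x * y) *: (w13) - w0 + w4 + (x + y - x * y) *: (w2) - (x + y - x * y) *: (w6) + (x + y) *: (w1) - (x + y) *: (w5) - w14 + (x * y) *: (w7) - (x * y) *: (w3))) = 0.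
Proof.
pose w := fun k => nth 0 [:: w0; w1; w2; w3; w4; w5; w6; w7; w8; w9; w10; w11; w12; w13; w14; w15] k.
have := congr1 (fpoly w) (key_poly x y).
rewrite !(fpolyD, fpolyN, fpolyZ) !fpolyX //.
by rewrite /fpoly big1 // => k _; rewrite coef0 scale0r.
Qed.

Lemma key (n i : nat) (hn : (3 <= n)%N) (hi : (1 <= i <= n - 2)%N)
    (A : algType Qt) (s sb : nat -> A) :
  braid_family n s sb -> cubic_rel n s sb ->
  relX s sb i * s i.+1 + relY s sb i = 0.
Proof.
move=> [hinv [hbr _]] hc.
have [aA Aa] := hinv i ltac:(lia).
have [bB Bb] := hinv i.+1 ltac:(lia).
have br := hbr i ltac:(lia) ltac:(lia).
have hb := hc i.+1 ltac:(lia).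
rewrite /relY /relX /relZ /=.
set a := s i in aA Aa br *; set b := s i.+1 in bB Bb br hb *.
set a' := sb i in aA Aa *; set b' := sb i.+1 in bB Bb hb *.
have hbb : b * b = - ((1 - t0 - t1) *: b + (t0 * t1 - t0 - t1) *: 1 + (t0 * t1) *: b').
  by rewrite -expr2; apply/eqP; rewrite -addr_eq0 !addrA; exact/eqP.
have l2 : a * b * a' * b = b' * a * (b * b) by rewrite mulrA (wL10 aA Bb br).
have l4 : a * b' * a' * b = b' * a' * (b * b) by rewrite mulrA (wL11 aA Aa bB Bb br).
rewrite !(mulrDl, mulrBl, mulNr, opprD, opprK).
rewrite (wL1 Aa br) l2 l4 (wL3 aA Aa Bb br).
rewrite -!(mulrA _ b b) -!(mulrA _ b' b) Bb !mulr1 hbb.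
rewrite !(mulrDr, mulrBr, mulrN) -!scalerAr !mulr1.
rewrite -br (wL10 aA Bb br) (wL11 aA Aa bB Bb br) (wL7 aA Aa bB Bb br).

exact: key_lin.
Qed.

Theorem lemma2p1 (n i : nat) (hn : (3 <= n)%N) (hi : (1 <= i <= n - 2)%N)
    (A : algType Qt) (s sb : nat -> A) :
  braid_family n s sb -> cubic_rel n s sb ->
  (relX s sb i = 0 <-> relY s sb i = 0).
Proof.
move=> hf hc; have hk := key hn hi hf hc.
have [bB _] := hf.1 i.+1 ltac:(lia).
split=> h.
  by move: hk; rewrite h mul0r add0r.
have : relX s sb i * s i.+1 = 0 by rewrite -hk h addr0.
by move/(congr1 (fun x => x * sb i.+1)); rewrite -mulrA bB mulr1 mul0r.
Qed.
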